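(* Let $n\ge 2$. For any two locally valid MV assignments $\mu_1,\mu_2$ of $M_{2,n}$ there exist proper $3$-colorings $\gamma,\beta$ of $M^*_{2,n}$ corresponding to $\mu_1,\mu_2$ respectively such that $$\min_{H\in 2\mathbb{Z}}\ \frac12\sum_{v\in V(M^*_{2,n})}\bigl|H+h_{\gamma,v_{1,1}}(\beta,v)\bigr|\le\left\lceil \frac{n^2}{2}\right\rceil .$$ Consequently the distance between $\mu_1$ and $\mu_2$ in ${\rm OFG}(M_{2,n})$ is at most $\lceil n^2/2\rceil$, the distance between two opposite vertices of degree $2$; that is, a pair of vertices at maximal distance is formed by two opposite degree-$2$ vertices.
   Context: The $2\times n$ Miura-ori $M_{2,n}$ has faces $\alpha_{i,j}$ ($i\in\{1,2\}$, $j\in\{1,\dots,n\}$), interior vertices $x_1,\dots,x_{n-1}$, creases $e_0$ and $e_{3k-1},e_{3k},e_{3k+1}$ ($k=1,\dots,n-1$); at $x_k$ the creases are left $e_{3k-3}$, top $e_{3k-1}$, right $e_{3k}$, bottom $e_{3k+1}$. Face $\alpha_{1,j}$ is bordered by those of $e_{3j-4}$ (iff $j\ge2$), $e_{3j-3}$, $e_{3j-1}$ (iff $j\le n-1$); $\alpha_{2,j}$ by those of $e_{3j-2}$ (iff $j\ge2$), $e_{3j-3}$, $e_{3j+1}$ (iff $j\le n-1$). An MV assignment $\mu$ maps creases to $\{1,-1\}$; it is locally valid if for each $k$ exactly one of $\mu(e_{3k-1}),\mu(e_{3k}),\mu(e_{3k+1})$ differs from $\mu(e_{3k-3})$. The face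 flip $\mu_\alpha$ negates $\mu$ on the creases bordering $\alpha$; $\alpha$ is flippable if $\mu,\mu_\alpha$ are both locally valid. ${\rm OFG}(M_{2,n})$ has the locally valid assignments as vertices, $\mu\sim\mu_\alpha$ for flippable $\alpha$. Opposite assignments: same flippable faces and opposite parity on every crease (i.e., $\mu$ and $-\mu$). $M^*_{2,n}$ is the grid graph on $v_{i,j}$ ($i\in\{1,2\}$, $1\le j\le n$), $v_{i,j}$ adjacent to $v_{i,j\pm1}$, $v_{3-i,j}$; colors in $\mathbb{Z}_3$. A proper $3$-coloring $\gamma$ corresponds to $\mu$ if, mod $3$: $\gamma(v_{1,j+1})=\gamma(v_{1,j})+\mu(e_{3j-1})$ for $1\le j\le n-1$; $\gamma(v_{2,n})=\gamma(v_{1,n})+\mu(e_{3n-3})$; $\gamma(v_{2,j-1})=\gamma(v_{2,j})+\mu(e_{3j-2})$ for $2\le j\le n$ (each locally valid $\mu$ corresponds to exactly three colorings, one per value of $\gamma(v_{1,1})$). Edge weight $w(\gamma,\overrightarrow{ab})\in\{1,-1\}$ with $w\equiv\gamma(b)-\gamma(a)$ mod $3$; path weight is the sum of edge weights (path independent). Relative height $h_{\gamma,u}(\beta,v)=w(\beta,P_{u,v})-w(\gamma,P_{u,v})$ for a directed path $P_{u,v}$ from $u$ to $v$. *)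

(* Defs.v *)
From HB Require Import structures.
From mathcomp Require Import all_boot all_order all_algebra.
Set Implicit Arguments. Unset Strict Implicit. Unset Printing Implicit Defensive.
Import Order.TTheory GRing.Theory Num.Theory.

(* Crease e_i is encoded by the natural number i.  The creases of M_{2,n} are
   e_0 and e_{3k-1}, e_{3k}, e_{3k+1} for 1 <= k <= n-1. *)
Definition is_crease (n e : nat) : bool := (e == 0) || (2 <= e <= 3 * n - 2).

(* An MV assignment: true = +1, false = -1 (only its values on creases matter). *)
Definition mv_assignment := nat -> bool.

Definition mv_val (b : bool) : int := if b then 1%R else (-1)%R.

(* local validity at every interior vertex x_k, 1 <= k <= n-1:
   exactly one of mu(e_{3k-1}), mu(e_{3k}), mu(e_{3k+1}) differs from mu(e_{3k-3}) *)
Definition locally_valid (n : nat) (mu : mv_assignment) : bool :=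
  [forall k : 'I_n, (0 < k) ==>
     (((mu (3 * k - 1) != mu (3 * k - 3)) : nat)
      + ((mu (3 * k) != mu (3 * k - 3)) : nat)
      + ((mu (3 * k + 1) != mu (3 * k - 3)) : nat) == 1)].

Definition is_face (n i j : nat) : bool := ((i == 1) || (i == 2)) && (1 <= j <= n).

Definition borders (n i j e : nat) : bool :=
  if i == 1 then
    ((2 <= j) && (e == 3 * j - 4)) || (e == 3 * j - 3) || ((j <= n - 1) && (e == 3 * j - 1))
  else
    ((2 <= j) && (e == 3 * j - 2)) || (e == 3 * j - 3) || ((j <= n - 1) && (e == 3 * j + 1)).

Definition face_flip (n i j : nat) (mu : mv_assignment) : mv_assignment :=
  fun e => if borders n i j e then ~~ mu e else mu e.

Definition flippable (n : nat) (mu : mv_assignment) (i j : nat) : bool :=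
  [&& is_face n i j, locally_valid n mu & locally_valid n (face_flip n i j mu)].

Definition ofg_degree (n : nat) (mu : mv_assignment) : nat :=
  \sum_(i < 2) \sum_(j < n) (flippable n mu i.+1 j.+1 : nat).

Definition same_vertex (n : nat) (mu nu : mv_assignment) : Prop :=
  forall e, is_crease n e -> mu e = nu e.

Fixpoint ofg_walk (n k : nat) (mu nu : mv_assignment) : Prop :=
  match k with
  | 0 => same_vertex n mu nu
  | k'.+1 => exists i j, flippable n mu i j /\ ofg_walk n k' (face_flip n i j mu) nu
  end.

Definition ofg_dist_le (n : nat) (mu nu : mv_assignment) (d : nat) : Prop :=
  exists k, k <= d /\ ofg_walk n k mu nu.

Definition ofg_dist (n : nat) (mu nu : mv_assignment) (d : nat) : Prop :=
  ofg_dist_le n mu nu d /\ forall k, ofg_walk n k mu nu -> d <= k.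

Definition opposite (mu : mv_assignment) : mv_assignment := fun e => ~~ mu e.

(* gamma i j is the colour of v_{i,j} (i in {1,2}, 1 <= j <= n), colours in Z_3 *)
Definition coloring := nat -> nat -> 'Z_3.

Definition proper_coloring (n : nat) (g : coloring) : Prop :=
  (forall i j, 1 <= i <= 2 -> 1 <= j -> j < n -> g i j != g i j.+1) /\
  (forall j, 1 <= j <= n -> g 1 j != g 2 j).

Definition z3_of (b : bool) : 'Z_3 := if b then 1%R else (-1)%R.

Definition corresponds (n : nat) (g : coloring) (mu : mv_assignment) : Prop :=
  (forall j, 1 <= j <= n - 1 -> g 1 j.+1 = (g 1 j + z3_of (mu (3 * j - 1)%N))%R) /\
  g 2 n = (g 1 n + z3_of (mu (3 * n - 3)%N))%R /\
  (forall j, 2 <= j <= n -> g 2 j.-1 = (g 2 j + z3_of (mu (3 * j - 2)%N))%R).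

Definition edge_weight (g : coloring) (a1 a2 b1 b2 : nat) : int :=
  if (g b1 b2 - g a1 a2 == 1)%R then 1%R else (-1)%R.

Definition path_weight (g : coloring) (i j : nat) : int :=
  (\sum_(1 <= k < j) edge_weight g 1 k 1 k.+1
   + (if i == 2 then edge_weight g 1 j 2 j else 0))%R.

Definition rel_height (g b : coloring) (i j : nat) : int :=
  (path_weight b i j - path_weight g i j)%R.

Definition height_cost (n : nat) (g b : coloring) (H : int) : rat :=
  ((1 / 2) * (\sum_(i < 2) \sum_(j < n) `|H + rel_height g b i.+1 j.+1|)%:~R)%R.

Definition ceil_half_sq (n : nat) : int := Num.ceil (((n ^ 2)%:R / 2 : rat))%R.

(* Main.v *)
Require Import Defs.
From mathcomp Require Import all_boot all_order all_algebra.
Import Order.TTheory GRing.Theory Num.Theory.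
From mathcomp Require Import zify ring lra.
Set Implicit Arguments. Unset Strict Implicit. Unset Printing Implicit Defensive.
Local Open Scope ring_scope.
Set Bullet Behavior "Strict Subproofs".

Lemma mv_pm b : mv_val b = 1 \/ mv_val b = -1.
Proof. by case: b; [left|right]. Qed.
Lemma mv_neg b : mv_val (~~ b) = - mv_val b. Proof. by case: b. Qed.
Lemma mv_inj : injective mv_val. Proof. by case; case. Qed.

Definition lvk (mu : mv_assignment) (k : nat) : Prop :=
  mv_val (mu (3*k-1)%N) + mv_val (mu (3*k)%N) + mv_val (mu (3*k+1)%N)
  = mv_val (mu (3*k-3)%N).

Lemma lvk_bool a b c d :
  (((b != a) : nat) + ((c != a) : nat) + ((d != a):nat) == 1)%N
  = (mv_val b + mv_val c + mv_val d == mv_val a).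
Proof. by case: a; case: b; case: c; case: d. Qed.

Lemma lvP n mu : locally_valid n mu <-> (forall k, (1 <= k < n)%N -> lvk mu k).
Proof.
split.
- move=> /forallP H k /andP [k1 kn]. have := H (Ordinal kn).
  by rewrite /= k1 /= lvk_bool => /eqP.
- move=> H; apply/forallP => k; apply/implyP => k0.
  rewrite lvk_bool; apply/eqP; apply: H. by rewrite k0 ltn_ord.
Qed.

Definition h (mu : mv_assignment) (i j : nat) : int :=
  \sum_(1 <= k < j) mv_val (mu (3*k-1)%N)
  + (if i == 2%N then mv_val (mu (3*j-3)%N) else 0).

Definition resp n mu (f : nat -> nat -> int) : Prop :=
  [/\ (forall j, (1 <= j < n)%N -> f 1%N j.+1 - f 1%N j = mv_val (mu (3*j-1)%N)),
      (forall j, (1 <= j <= n)%N -> f 2%N j - f 1%N j = mv_val (mu (3*j-3)%N)) &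
      (forall j, (1 <= j < n)%N -> f 2%N j - f 2%N j.+1 = mv_val (mu (3*j+1)%N))].

Lemma h1S mu j : (1 <= j)%N -> h mu 1 j.+1 = h mu 1 j + mv_val (mu (3*j-1)%N).
Proof. by move=> j1; rewrite /h /= !addr0 big_nat_recr. Qed.

Lemma h2E mu j : h mu 2 j = h mu 1 j + mv_val (mu (3*j-3)%N).
Proof. by rewrite /h /= addr0. Qed.

Lemma h11 mu : h mu 1 1 = 0.
Proof. by rewrite /h big_geq. Qed.

Lemma resp_h n mu : locally_valid n mu -> resp n mu (h mu).
Proof.
move=> /lvP H; split.
- move=> j /andP[j1 _]; rewrite h1S //; ring.
- move=> j _; rewrite h2E; ring.
- move=> j /andP[j1 jn]. have := H j; rewrite /lvk => /(_ (ltac:(lia))).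
  rewrite !h2E h1S // (_ : (3 * j.+1 - 3 = 3 * j)%N); last by lia.
  move=> E; rewrite -E; ring.
Qed.

Lemma resp_valid n mu f : resp n mu f -> locally_valid n mu.
Proof.
case=> R1 R2 R3; apply/lvP => k /andP[k1 kn]; rewrite /lvk.
rewrite -R1 ?k1 // -R3 ?k1 // -R2 ?k1 ?(ltnW kn) //.
rewrite (_ : (3 * k = 3 * k.+1 - 3)%N); last by lia.
rewrite -R2 ?kn //; ring.
Qed.

Lemma resp_uniq n mu f : resp n mu f -> forall i j, (1 <= i <= 2)%N -> (1 <= j <= n)%N ->
  f i j - f 1%N 1%N = h mu i j.
Proof.
case=> R1 R2 R3.
have row1 : forall j, (1 <= j <= n)%N -> f 1%N j - f 1%N 1%N = h mu 1 j.
  elim=> [|j IH] //; case: j IH => [|j] IH.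
    by rewrite h11 subrr.
  move=> /andP[_ jn]. rewrite h1S // -R1 ?(ltnW jn) //.
  rewrite -IH ?(ltnW jn) //; ring.
move=> i j /andP[i1 i2] jr.
have [->|->] : (i = 1 \/ i = 2)%N by lia.
  exact: row1.
rewrite h2E -row1 // -R2 //; ring.
Qed.

Lemma ffE n i j mu e : mv_val (face_flip n i j mu e) =
  if borders n i j e then - mv_val (mu e) else mv_val (mu e).
Proof. by rewrite /face_flip; case: ifP => //; rewrite mv_neg. Qed.

Lemma bord_r1 n i j j' : (1 <= i <= 2)%N -> (1 <= j <= n)%N -> (1 <= j' < n)%N ->
  borders n i j (3*j'-1) = ((i == 1) && (j == j'))%N || ((i == 1) && (j == j'.+1))%N.
Proof.
move=> ir jr jr'; have [->|->] : (i = 1 \/ i = 2)%N by lia.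
all: rewrite /borders /=; lia.
Qed.

Lemma bord_v n i j j' : (1 <= i <= 2)%N -> (1 <= j <= n)%N -> (1 <= j' <= n)%N ->
  borders n i j (3*j'-3) = (j == j')%N.
Proof.
move=> ir jr jr'; have [->|->] : (i = 1 \/ i = 2)%N by lia.
all: rewrite /borders /=; lia.
Qed.

Lemma bord_r2 n i j j' : (1 <= i <= 2)%N -> (1 <= j <= n)%N -> (1 <= j' < n)%N ->
  borders n i j (3*j'+1) = ((i == 2) && (j == j'))%N || ((i == 2) && (j == j'.+1))%N.
Proof.
move=> ir jr jr'; have [->|->] : (i = 1 \/ i = 2)%N by lia.
all: rewrite /borders /=; lia.
Qed.

Definition ext n (f : nat -> nat -> int) i j (s : int) : Prop :=
  [/\ (1 < j)%N -> f i j.-1 - f i j = s, (j < n)%N -> f i j.+1 - f i j = s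
    & f (if i == 1%N then 2%N else 1%N) j - f i j = s].

Definition fup (f : nat -> nat -> int) i j (s : int) : nat -> nat -> int :=
  fun i' j' => if ((i == i') && (j == j'))%N then f i' j' + 2 * s else f i' j'.

Ltac finish_case := repeat match goal with
 | H : is_true ((_ == _) && (_ == _)) |- _ => case/andP: H => /eqP ? /eqP ?; subst
 end; rewrite ?eqxx; simpl in *; try lia; try (case: ifP => ?; lia).

Lemma flip_resp n mu f i j s : resp n mu f -> (1 <= i <= 2)%N -> (1 <= j <= n)%N ->
  ext n f i j s -> resp n (face_flip n i j mu) (fup f i j s).
Proof.
case=> R1 R2 R3 ir jr [E1 E2 E3]; split.
- move=> j' jr'; rewrite ffE bord_r1 // /fup -R1 //.
  case: (boolP ((i == 1) && (j == j'.+1))%N);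
  case: (boolP ((i == 1) && (j == j'))%N) => /= B1 B2; finish_case.
- move=> j' jr'; rewrite ffE bord_v // /fup -R2 //.
  case: (boolP ((i == 1) && (j == j'))%N);
  case: (boolP ((i == 2) && (j == j'))%N) => /= B1 B2; finish_case.
- move=> j' jr'; rewrite ffE bord_r2 // /fup -R3 //.
  case: (boolP ((i == 2) && (j == j'.+1))%N);
  case: (boolP ((i == 2) && (j == j'))%N) => /= B1 B2; finish_case.
Qed.

Ltac decide_ifs := repeat match goal with
  |- context [if ?c then _ else _] =>
     first [ have -> : c = true by lia | have -> : c = false by lia ] end.

Lemma flip_ext n mu f i j : resp n mu f -> locally_valid n mu ->
  (1 <= i <= 2)%N -> (1 <= j <= n)%N -> locally_valid n (face_flip n i j mu) ->
  ext n f i j (f (if i == 1%N then 2%N else 1%N) j - f i j).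
Proof.
case=> R1 R2 R3 /lvP V ir jr /lvP V'.
have [? | ?] : (i = 1 \/ i = 2)%N by lia.
all: subst i; split => //=.
all: try (move=> jn; have := V j (ltac:(lia)); have := V' j (ltac:(lia));
  have := R1 j (ltac:(lia)); have := R2 j (ltac:(lia)); have := R3 j (ltac:(lia));
  rewrite /lvk !ffE /borders /=; decide_ifs; lia).
all: case: j jr R1 R2 R3 V V' => [|k] // jr R1 R2 R3 V V' k1 /=.
all: have := V k (ltac:(lia)); have := V' k (ltac:(lia));
  have := R1 k (ltac:(lia)); have := R2 k.+1 (ltac:(lia)); have := R3 k (ltac:(lia));
  rewrite (_ : (3 * k.+1 - 3 = 3 * k)%N); last lia;
  rewrite /lvk !ffE /borders /=; decide_ifs; lia.
Qed.

Lemma flippableP n mu i j : locally_valid n mu -> (1 <= i <= 2)%N -> (1 <= j <= n)%N ->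
  flippable n mu i j <-> exists s : int, (s = 1 \/ s = -1) /\ ext n (h mu) i j s.
Proof.
move=> V ir jr; split.
- case/and3P=> _ _ V'. have E := flip_ext (resp_h V) V ir jr V'.
  exists (h mu (if i == 1%N then 2%N else 1%N) j - h mu i j); split; last exact: E.
  case: (resp_h V) => _ R2 _; have := R2 j jr; have := mv_pm (mu (3 * j - 3)%N).
  have [Hi | Hi] : (i = 1 \/ i = 2)%N by lia.
  all: rewrite Hi /=; lia.
- case=> s [_ E]; apply/and3P; split => //.
    rewrite /is_face; lia.
  exact: resp_valid (flip_resp (resp_h V) ir jr E).
Qed.

Lemma h_flip n mu i j s : locally_valid n mu -> (1 <= i <= 2)%N -> (1 <= j <= n)%N ->
  ext n (h mu) i j s -> forall i' j', (1 <= i' <= 2)%N -> (1 <= j' <= n)%N ->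
  h (face_flip n i j mu) i' j' = fup (h mu) i j s i' j' - fup (h mu) i j s 1 1.
Proof.
move=> V ir jr E i' j' ir' jr'.
by rewrite -(resp_uniq (flip_resp (resp_h V) ir jr E)).
Qed.

Lemma h_par mu i j : (1 <= i <= 2)%N -> (1 <= j)%N -> exists q : int, h mu i j = 2 * q + (i + j)%:Z.
Proof.
have row1 : forall j, (1 <= j)%N -> exists q : int, h mu 1 j = 2 * q + (1 + j)%:Z.
  elim=> [|j0 IH] // _; case: j0 IH => [|j0] IH.
    by exists (-1); rewrite h11.
  case: (IH isT) => q Hq; rewrite h1S // Hq.
  case: (mv_pm (mu (3 * j0.+1 - 1)%N)) => ->.
    by exists q; lia.
  by exists (q - 1); lia.
move=> ir j1; have [? | ?] : (i = 1 \/ i = 2)%N by lia.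
all: subst i.
  exact: (row1 j j1).
case: (row1 j j1) => q Hq; rewrite h2E Hq.
case: (mv_pm (mu (3 * j - 3)%N)) => ->.
  by exists q; lia.
by exists (q - 1); lia.
Qed.

Lemma same_h n mu nu : same_vertex n mu nu -> forall i j, (1 <= j <= n)%N ->
  h mu i j = h nu i j.
Proof.
move=> S i j jr; rewrite /h; congr (_ + _).
  apply: eq_big_nat => k kr; rewrite S //; rewrite /is_crease; lia.
case: ifP => // _; rewrite S //; rewrite /is_crease; lia.
Qed.

Lemma resp_same n mu nu f : (1 <= n)%N -> resp n mu f -> resp n nu f -> same_vertex n mu nu.
Proof.
move=> n1; case=> A1 A2 A3 [B1 B2 B3] e; rewrite /is_crease => ec.
have [[j [-> jr]] | [[j [-> jr]] | [j [-> jr]]]] :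
  (exists j, e = 3 * j - 1 /\ (1 <= j < n))%N \/ (exists j, e = 3 * j - 3 /\ (1 <= j <= n))%N
  \/ (exists j, e = 3 * j + 1 /\ (1 <= j < n))%N.
- have : (e %% 3 = 0 \/ e %% 3 = 1 \/ e %% 3 = 2)%N by lia.
  case=> [m0|[m1|m2]].
  + right; left; exists (e %/ 3)%N.+1; lia.
  + right; right; exists (e %/ 3)%N; lia.
  + left; exists (e %/ 3)%N.+1; lia.
- by apply: mv_inj; rewrite -A1 // -B1.
- by apply: mv_inj; rewrite -A2 // -B2.
- by apply: mv_inj; rewrite -A3 // -B3.
Qed.

Definition cst n (mu nu : mv_assignment) (H : int) : int :=
  \sum_(p : 'I_2 * 'I_n) `|H + h nu p.1.+1 p.2.+1 - h mu p.1.+1 p.2.+1|.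

Lemma ord_all n (P : nat -> nat -> Prop) : (forall p : 'I_2 * 'I_n, P p.1.+1 p.2.+1) ->
  forall i j, (1 <= i <= 2)%N -> (1 <= j <= n)%N -> P i j.
Proof.
move=> H i j ir jr. have i2 : (i.-1 < 2)%N by lia. have jn : (j.-1 < n)%N by lia.
have := H (Ordinal i2, Ordinal jn).
have -> : (Ordinal i2, Ordinal jn).1.+1 = i by rewrite /=; lia.
by have -> : (Ordinal i2, Ordinal jn).2.+1 = j by rewrite /=; lia.
Qed.

Lemma exQ n i j : (1 <= i <= 2)%N -> (1 <= j <= n)%N ->
  exists q : 'I_2 * 'I_n, q.1.+1 = i /\ q.2.+1 = j.
Proof.
move=> ir jr. have i2 : (i.-1 < 2)%N by lia. have jn : (j.-1 < n)%N by lia.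
exists (Ordinal i2, Ordinal jn) => /=; lia.
Qed.

Lemma pair_eqS n (q p : 'I_2 * 'I_n) : ((q.1.+1 == p.1.+1) && (q.2.+1 == p.2.+1))%N = (q == p).
Proof. by case: q p => [a b] [c d]; rewrite xpair_eqE /= !eqSS. Qed.

Lemma sum_one (T : finType) (p0 : T) (F G : T -> int) :
  (forall p, p != p0 -> F p = G p) -> \sum_p F p = \sum_p G p - G p0 + F p0.
Proof.
move=> E; rewrite (bigD1 p0) // [in RHS](bigD1 p0) //=.
under eq_bigr => p Hp do rewrite E //.
ring.
Qed.

Lemma walk_lb n k : forall mu nu, (1 <= n)%N -> locally_valid n mu ->
  ofg_walk n k mu nu -> exists H, cst n mu nu H <= 2 * k%:Z.
Proof.
elim: k => [|k IH] mu nu n1 V /=.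
  move=> W; exists 0; rewrite mulr0 le_eqVlt; apply/orP; left; apply/eqP.
  rewrite /cst big1 // => p _. rewrite add0r (same_h W) ?subrr //.
  by rewrite ltn_ord.
case=> i [j [Fl W]]; have Fl' := Fl; case/and3P: Fl => Fc _ V'.
have ir : (1 <= i <= 2)%N by move: Fc; rewrite /is_face; lia.
have jr : (1 <= j <= n)%N by move: Fc; rewrite /is_face; lia.
case: (flippableP V ir jr) => /(_ Fl') [s [Hs E]] _.
case: (IH _ _ n1 V' W) => H HH.
case: (exQ ir jr) => q [ei ej]; subst i j.
set c := fup (h mu) q.1.+1 q.2.+1 s 1 1.
exists (H + c).
have key : forall p : 'I_2 * 'I_n, h (face_flip n q.1.+1 q.2.+1 mu) p.1.+1 p.2.+1 =
  fup (h mu) q.1.+1 q.2.+1 s p.1.+1 p.2.+1 - c.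
  move=> p; apply: h_flip => //; rewrite ?ltn_ord //; lia.
rewrite /cst (@sum_one _ q _ (fun p => `|H + h nu p.1.+1 p.2.+1
   - h (face_flip n q.1.+1 q.2.+1 mu) p.1.+1 p.2.+1|)).
- move: HH; rewrite /cst !key /fup eqxx eqxx /=.
  set S := (\sum_p _); clearbody c. lia.
- move=> p Hp; rewrite key /fup pair_eqS eq_sym (negbTE Hp); clearbody c; congr (`|_|); ring.
Qed.

Lemma ext_of_extreme n mu1 mu2 (H0 s : int) i j :
  locally_valid n mu1 -> locally_valid n mu2 -> (s = 1 \/ s = -1) ->
  (1 <= i <= 2)%N -> (1 <= j <= n)%N ->
  (forall i' j', (1 <= i' <= 2)%N -> (1 <= j' <= n)%N ->
     s * (2 * H0 + h mu2 i' j' - h mu1 i' j') <= s * (2 * H0 + h mu2 i j - h mu1 i j)) ->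
  (forall i' j', (1 <= i' <= 2)%N -> (1 <= j' <= n)%N ->
     s * (2 * H0 + h mu2 i' j' - h mu1 i' j') = s * (2 * H0 + h mu2 i j - h mu1 i j) ->
     s * h mu1 i j <= s * h mu1 i' j') ->
  ext n (h mu1) i j s.
Proof.
move=> V1 V2 Hs ir jr MX MN.
case: (resp_h V1) => A1 A2 A3; case: (resp_h V2) => B1 B2 B3.
have [? | ?] : (i = 1 \/ i = 2)%N by lia.
all: subst i; split => /=.
- move=> j1; have := A1 j.-1; have := B1 j.-1; have := MX 1%N j.-1; have := MN 1%N j.-1.
  have := mv_pm (mu1 (3 * j.-1 - 1)%N); have := mv_pm (mu2 (3 * j.-1 - 1)%N).
  rewrite (_ : j.-1.+1 = j)%N; last lia.
  by case: Hs => ?; subst s; lia.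
- move=> jn; have := A1 j; have := B1 j; have := MX 1%N j.+1; have := MN 1%N j.+1.
  have := mv_pm (mu1 (3 * j - 1)%N); have := mv_pm (mu2 (3 * j - 1)%N).
  by case: Hs => ?; subst s; lia.
- have := A2 j; have := B2 j; have := MX 2%N j; have := MN 2%N j.
  have := mv_pm (mu1 (3 * j - 3)%N); have := mv_pm (mu2 (3 * j - 3)%N).
  by case: Hs => ?; subst s; lia.
- move=> j1; have := A3 j.-1; have := B3 j.-1; have := MX 2%N j.-1; have := MN 2%N j.-1.
  have := mv_pm (mu1 (3 * j.-1 + 1)%N); have := mv_pm (mu2 (3 * j.-1 + 1)%N).
  rewrite (_ : j.-1.+1 = j)%N; last lia.
  by case: Hs => ?; subst s; lia.
- move=> jn; have := A3 j; have := B3 j; have := MX 2%N j.+1; have := MN 2%N j.+1.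
  have := mv_pm (mu1 (3 * j + 1)%N); have := mv_pm (mu2 (3 * j + 1)%N).
  by case: Hs => ?; subst s; lia.
- have := A2 j; have := B2 j; have := MX 1%N j; have := MN 1%N j.
  have := mv_pm (mu1 (3 * j - 3)%N); have := mv_pm (mu2 (3 * j - 3)%N).
  by case: Hs => ?; subst s; lia.
Qed.

Lemma resp_ext n mu f g : resp n mu f ->
  (forall i j, (1 <= i <= 2)%N -> (1 <= j <= n)%N -> f i j = g i j) -> resp n mu g.
Proof.
case=> R1 R2 R3 E; split => j jr; rewrite -!E; try lia.
- exact: R1.
- exact: R2.
- exact: R3.
Qed.

Lemma zero_walk n mu1 mu2 (H0 : int) : (1 <= n)%N -> locally_valid n mu1 -> locally_valid n mu2 ->
  (forall p : 'I_2 * 'I_n, 2 * H0 + h mu2 p.1.+1 p.2.+1 - h mu1 p.1.+1 p.2.+1 = 0) ->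
  same_vertex n mu1 mu2.
Proof.
move=> n1 V1 V2 Z.
have := Z (ord0, Ordinal n1); rewrite /= !h11 => Z0.
have E : forall i j, (1 <= i <= 2)%N -> (1 <= j <= n)%N -> h mu2 i j = h mu1 i j.
  apply: (ord_all (P := fun i j => h mu2 i j = h mu1 i j)) => p.
  have := Z p; lia.
exact: resp_same n1 (resp_h V1) (resp_ext (resp_h V2) E).
Qed.

Lemma cst_ge n mu1 mu2 H (p : 'I_2 * 'I_n) :
  `|H + h mu2 p.1.+1 p.2.+1 - h mu1 p.1.+1 p.2.+1| <= cst n mu1 mu2 H.
Proof.
rewrite /cst (bigD1 p) //= lerDl sumr_ge0 // => *; exact: normr_ge0.
Qed.

Lemma walk_build n mu2 : (1 <= n)%N -> locally_valid n mu2 ->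
  forall k mu1 (H0 : int), locally_valid n mu1 -> cst n mu1 mu2 (2 * H0) <= 2 * k%:Z ->
  exists k', (k' <= k)%N /\ ofg_walk n k' mu1 mu2.
Proof.
move=> n1 V2; elim=> [|k IH] mu1 H0 V1 HC.
all: case: (boolP [forall p : 'I_2 * 'I_n,
   2 * H0 + h mu2 p.1.+1 p.2.+1 - h mu1 p.1.+1 p.2.+1 == 0]) => [/forallP Z | /forallPn [p1 Hp1]].
1,3: by exists 0%N; split => //=; apply: (zero_walk n1 V1 V2) => p; apply/eqP; exact: Z.
  have := @cst_ge n mu1 mu2 (2 * H0) p1; move: HC Hp1; set S := cst _ _ _ _; lia.
set D := fun p : 'I_2 * 'I_n => 2 * H0 + h mu2 p.1.+1 p.2.+1 - h mu1 p.1.+1 p.2.+1.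
have [s [Hs Hsp]] : exists s : int, (s = 1 \/ s = -1) /\ 0 < s * D p1.
  case: (boolP (0 < D p1)) => Hpos; [exists 1 | exists (-1)]; move: Hp1 Hpos; rewrite /D; lia.
pose F := fun p => s * D p.
case: (@arg_maxP _ _ _ p1 predT F isT) => pm _ Hmax.
case: (@arg_minP _ _ _ pm [pred p | F p == F pm] (fun p => s * h mu1 p.1.+1 p.2.+1) (eqxx _))
  => q /= /eqP Fq Hmin.
have ir : (1 <= q.1.+1 <= 2)%N by have := ltn_ord q.1; lia.
have jr : (1 <= q.2.+1 <= n)%N by have := ltn_ord q.2; lia.
have E : ext n (h mu1) q.1.+1 q.2.+1 s.
{ apply: (ext_of_extreme (H0 := H0) V1 V2 Hs ir jr).
  - apply: (ord_all (P := fun i' j' => s * (2 * H0 + h mu2 i' j' - h mu1 i' j') <=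
       s * (2 * H0 + h mu2 q.1.+1 q.2.+1 - h mu1 q.1.+1 q.2.+1))) => p.
    by have := Hmax p isT; rewrite -Fq /F /D.
  - apply: (ord_all (P := fun i' j' => s * (2 * H0 + h mu2 i' j' - h mu1 i' j') =
       s * (2 * H0 + h mu2 q.1.+1 q.2.+1 - h mu1 q.1.+1 q.2.+1) ->
       s * h mu1 q.1.+1 q.2.+1 <= s * h mu1 i' j')) => p Heq.
    by apply: Hmin; rewrite -Fq /F /D; apply/eqP; exact: Heq. }
have Fl : flippable n mu1 q.1.+1 q.2.+1 by apply/(flippableP V1 ir jr); exists s.
have V1' : locally_valid n (face_flip n q.1.+1 q.2.+1 mu1) by case/and3P: Fl.
set c := fup (h mu1) q.1.+1 q.2.+1 s 1 1.
have key : forall p : 'I_2 * 'I_n, h (face_flip n q.1.+1 q.2.+1 mu1) p.1.+1 p.2.+1 =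
  fup (h mu1) q.1.+1 q.2.+1 s p.1.+1 p.2.+1 - c.
  move=> p; apply: h_flip => //; rewrite ?ltn_ord //; lia.
set b := (if ((q.1.+1 == 1) && (q.2.+1 == 1))%N then s else 0).
have cE : c = 2 * b by rewrite /c /b /fup; case: ifP; rewrite h11 => _; ring.
have HC' : cst n (face_flip n q.1.+1 q.2.+1 mu1) mu2 (2 * (H0 - b)) <= 2 * k%:Z.
{ rewrite /cst (@sum_one _ q _ (fun p => `|2 * H0 + h mu2 p.1.+1 p.2.+1 - h mu1 p.1.+1 p.2.+1|)).
  - move: HC; rewrite /cst key /fup eqxx eqxx /= cE.
    have [a1 Ha1] := h_par mu1 ir (isT : (1 <= q.2.+1)%N).
    have [a2 Ha2] := h_par mu2 ir (isT : (1 <= q.2.+1)%N).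
    move: Hsp Fq (Hmax p1 isT); rewrite /F /D Ha1 Ha2.
    set S := (\sum_p _); clearbody b c; case: Hs => ?; subst s; lia.
  - move=> p Hp; rewrite key /fup pair_eqS eq_sym (negbTE Hp) cE.
    clearbody b c; congr (`|_|); ring. }
case: (IH _ _ V1' HC') => k' [k'k W].
exists k'.+1; split => //=.
by exists q.1.+1, q.2.+1.
Qed.

Lemma sum_odd a : \sum_(0 <= j < a) (2 * j%:Z + 1) = (a ^ 2)%N%:Z.
Proof.
elim: a => [|a IH]; first by rewrite big_geq.
rewrite big_nat_recr //= IH; lia.
Qed.

Lemma sum_even a : \sum_(0 <= j < a) (2 * j%:Z + 2) = (a * a.+1)%N%:Z.
Proof.
elim: a => [|a IH]; first by rewrite big_geq.
rewrite big_nat_recr //= IH; lia.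
Qed.

Lemma S1 a b : \sum_(0 <= j < a + b) `|2 * j%:Z + 1 - 2 * a%:Z| = (a ^ 2 + b ^ 2)%N%:Z.
Proof.
elim: b => [|b IH].
  rewrite addn0 big_nat_rev /= (_ : (a ^ 2 + 0 ^ 2 = a ^ 2)%N); last lia.
  rewrite -sum_odd.
  by apply: eq_big_nat => j jr; rewrite add0n; lia.
rewrite addnS big_nat_recr //= IH; lia.
Qed.

Lemma S2 a b : \sum_(0 <= j < a + b) `|2 * j%:Z - 2 * a%:Z| = (a * a.+1 + b * b.-1)%N%:Z.
Proof.
elim: b => [|b IH].
  rewrite addn0 big_nat_rev /= (_ : (a * a.+1 + 0 * 0.-1 = a * a.+1)%N); last lia.
  rewrite -sum_even.
  by apply: eq_big_nat => j jr; rewrite add0n; lia.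
rewrite addnS big_nat_recr //= IH; nia.
Qed.

Definition cc (n : nat) : nat := ((n ^ 2).+1 %/ 2)%N.

Lemma center n : (2 <= n)%N -> exists k0, [/\ (k0.+1 < n)%N,
  (k0 * k0.+1 + (n - k0) * (n - k0).-1 <= cc n)%N &
  ((k0.+1) ^ 2 + (n - k0.+1) ^ 2 <= cc n)%N].
Proof.
move=> n2; rewrite /cc.
have [p [Hn|Hn]] : exists p, n = p.*2 \/ n = p.*2.+1.
  exists n./2; rewrite -{1 3}(odd_double_half n); case: (odd n); [right|left] => //.
all: subst n.
- have -> : ((p.*2 ^ 2).+1 %/ 2 = 2 * p * p)%N by nia.
  case: p n2 => [//|q] n2; exists q.
  rewrite (_ : (q.+1.*2 - q = q.+2)%N); last lia.
  rewrite (_ : (q.+1.*2 - q.+1 = q.+1)%N); last lia.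
  rewrite /=; split; nia.
- have -> : ((p.*2.+1 ^ 2).+1 %/ 2 = 2 * p * p + 2 * p + 1)%N by nia.
  exists p.
  rewrite (_ : (p.*2.+1 - p = p.+1)%N); last lia.
  rewrite (_ : (p.*2.+1 - p.+1 = p)%N); last lia.
  rewrite /=; split; nia.
Qed.

Lemma oneD n (u : nat -> int) : (2 <= n)%N ->
  (forall j, (j.+1 < n)%N -> `|u j.+1 - u j| <= 2) ->
  exists m : int, \sum_(0 <= j < n) `|u j + 2 * m| <= (cc n)%:Z.
Proof.
move=> n2 step.
have dist : forall d k, (k + d < n)%N -> `|u (k + d)%N - u k| <= 2 * d%:Z.
  elim=> [|d IH] k kd; first by rewrite addn0 subrr normr0 mulr0.
  have h1 : (k + d < n)%N by lia.
  have h2 : ((k + d).+1 < n)%N by lia.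
  have := IH k h1; have := step (k + d)%N h2.
  rewrite addnS; lia.
have dist2 : forall j k, (j < n)%N -> (k < n)%N -> `|u j - u k| <= 2 * `|j%:Z - k%:Z|.
  move=> j k jn kn; case: (leqP k j) => H.
  { have := dist (j - k)%N k; rewrite subnKC //; move=> /(_ jn); lia. }
  { have := dist (k - j)%N j; rewrite subnKC ?(ltnW H) //; move=> /(_ kn); lia. }
case: (center n2) => k0 [k0n CA CB].
have [a [Ha|Ha]] : exists a : int, u k0 = 2 * a \/ u k0 = 2 * a + 1.
  by exists (u k0 %/ 2)%Z; lia.
- exists (-a).
  have S := S2 k0 (n - k0); rewrite subnKC in S; last lia.
  apply: le_trans (_ : \sum_(0 <= j < n) `|2 * j%:Z - 2 * k0%:Z| <= _).
  + apply: ler_sum_nat => j jr; have := dist2 j k0; lia.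
  + rewrite S; lia.
- pose m := if u k0 <= u k0.+1 then - (a + 1) else - a.
  have Hm : `|u k0 + 2 * m| <= 1 /\ `|u k0.+1 + 2 * m| <= 1.
    have := step k0 k0n; rewrite /m; case: ifP; lia.
  exists m.
  have S := S1 k0.+1 (n - k0.+1); rewrite subnKC in S; last lia.
  apply: le_trans (_ : \sum_(0 <= j < n) `|2 * j%:Z + 1 - 2 * k0.+1%:Z| <= _).
  + apply: ler_sum_nat => j jr; have := dist2 j k0; have := dist2 j k0.+1.
    clearbody m; lia.
  + rewrite S; lia.
Qed.

Lemma cost_bound n mu1 mu2 : (2 <= n)%N -> locally_valid n mu1 -> locally_valid n mu2 ->
  exists m : int, cst n mu1 mu2 (2 * m) <= 2 * (cc n)%:Z.
Proof.
move=> n2 V1 V2.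
pose d i j := ((h mu2 i j - h mu1 i j) %/ 2)%Z.
have Dd : forall i j, (1 <= i <= 2)%N -> (1 <= j)%N -> h mu2 i j - h mu1 i j = 2 * d i j.
  move=> i j ir jr; have [q1 H1] := h_par mu1 ir jr; have [q2 H2] := h_par mu2 ir jr.
  rewrite /d H1 H2; lia.
case: (resp_h V1) => A1 A2 A3; case: (resp_h V2) => B1 B2 B3.
pose u j := d 1%N j.+1 + d 2%N j.+1.
have step : forall j, (j.+1 < n)%N -> `|u j.+1 - u j| <= 2.
  move=> j jn; rewrite /u.
  have := Dd 1%N j.+1; have := Dd 1%N j.+2; have := Dd 2%N j.+1; have := Dd 2%N j.+2.
  have := A1 j.+1; have := B1 j.+1; have := A3 j.+1; have := B3 j.+1.
  have := mv_pm (mu1 (3 * j.+1 - 1)%N); have := mv_pm (mu2 (3 * j.+1 - 1)%N).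
  have := mv_pm (mu1 (3 * j.+1 + 1)%N); have := mv_pm (mu2 (3 * j.+1 + 1)%N).
  clearbody d; intros; lia.
case: (oneD n2 step) => m Hm; exists m.
apply: le_trans (_ : \sum_(0 <= j < n) 2 * `|u j + 2 * m| <= _); last first.
  by rewrite -mulr_sumr ler_pM2l.
rewrite /cst -(pair_bigA _ (fun (i : 'I_2) (j : 'I_n) =>
   `|2 * m + h mu2 i.+1 j.+1 - h mu1 i.+1 j.+1|)).
rewrite big_ord_recr big_ord_recr big_ord0 /= add0r -big_split /= big_mkord.
apply: ler_sum => j _ /=.
have := Dd 1%N j.+1; have := Dd 2%N j.+1; have := A2 j.+1; have := B2 j.+1.
have := mv_pm (mu1 (3 * j.+1 - 3)%N); have := mv_pm (mu2 (3 * j.+1 - 3)%N).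
have := ltn_ord j; rewrite /u; clearbody d; intros; lia.
Qed.

Lemma ceilE n : ceil_half_sq n = (cc n)%:Z.
Proof.
rewrite /ceil_half_sq /cc; apply: Num.Theory.ceil_def; apply/andP; split.
- rewrite ltr_pdivlMr // -[(2 : rat)]/((2%:Z)%:~R) -intrM.
  rewrite -[(((n ^ 2)%N)%:R : rat)]/((((n ^ 2)%N)%:Z)%:~R) ltr_int; lia.
- rewrite ler_pdivrMr // -[(2 : rat)]/((2%:Z)%:~R) -intrM.
  rewrite -[(((n ^ 2)%N)%:R : rat)]/((((n ^ 2)%N)%:Z)%:~R) ler_int; lia.
Qed.

Lemma flip_of n mu i j (s : int) : locally_valid n mu -> (1 <= i <= 2)%N -> (1 <= j <= n)%N ->
  (s = 1 \/ s = -1) ->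
  ((1 < j)%N -> h mu i j.-1 - h mu i j = s) -> ((j < n)%N -> h mu i j.+1 - h mu i j = s) ->
  h mu (if i == 1%N then 2%N else 1%N) j - h mu i j = s -> flippable n mu i j.
Proof.
move=> V ir jr Hs A B C; apply/(flippableP V ir jr); exists s; split => //; by split.
Qed.

Lemma noflip n mu i j (s : int) : locally_valid n mu -> (1 <= i <= 2)%N -> (1 <= j <= n)%N ->
  ~~ flippable n mu i j -> (s = 1 \/ s = -1) ->
  ~ [/\ ((1 < j)%N -> h mu i j.-1 - h mu i j = s), ((j < n)%N -> h mu i j.+1 - h mu i j = s)
     & h mu (if i == 1%N then 2%N else 1%N) j - h mu i j = s].
Proof.
move=> V ir jr /negP nF Hs [A B C]; apply: nF; exact: flip_of V ir jr Hs A B C.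
Qed.

Lemma and3_iff (A B C : Prop) : [/\ A, B & C] <-> A /\ B /\ C.
Proof. by split; [case | case => ? [? ?]]. Qed.

Lemma col_int n mu k : locally_valid n mu -> (1 <= k)%N -> (k.+2 <= n)%N ->
  ~~ flippable n mu 1 k.+1 -> ~~ flippable n mu 2 k.+1 ->
  [/\ h mu 1 k.+1 - h mu 1 k = h mu 2 k.+1 - h mu 2 k,
      h mu 1 k.+1 - h mu 1 k = h mu 1 k.+2 - h mu 1 k.+1 &
      h mu 2 k.+1 - h mu 2 k = h mu 2 k.+2 - h mu 2 k.+1].
Proof.
move=> V k1 kn nf1 nf2.
have ir1 : (1 <= 1 <= 2)%N by []. have ir2 : (1 <= 2 <= 2)%N by [].
have jr : (1 <= k.+1 <= n)%N by lia.
case: (resp_h V) => R1 R2 R3.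
have E1 := R1 k (ltac:(lia)); have E2 := R1 k.+1 (ltac:(lia)).
have E3 := R2 k (ltac:(lia)); have E4 := R2 k.+1 (ltac:(lia)); have E5 := R2 k.+2 (ltac:(lia)).
have E6 := R3 k (ltac:(lia)); have E7 := R3 k.+1 (ltac:(lia)).
have Ht : (h mu 2 k.+1 - h mu 1 k.+1 = 1 \/ h mu 2 k.+1 - h mu 1 k.+1 = -1).
  rewrite E4; exact: mv_pm.
have N1 := noflip V ir1 jr nf1 Ht.
have Ht' : (h mu 1 k.+1 - h mu 2 k.+1 = 1 \/ h mu 1 k.+1 - h mu 2 k.+1 = -1) by lia.
have N3 := noflip V ir2 jr nf2 Ht'.
rewrite /= ?and3_iff in N1 N3.
clear R1 R2 R3 Ht Ht' nf1 nf2 V.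
move: E1 E2 E3 E4 E5 E6 E7.
case: (mu (3 * k - 1)%N); case: (mu (3 * k.+1 - 1)%N); case: (mu (3 * k - 3)%N);
case: (mu (3 * k.+1 - 3)%N); case: (mu (3 * k.+2 - 3)%N);
case: (mu (3 * k + 1)%N); case: (mu (3 * k.+1 + 1)%N); rewrite /=.
all: move=> *; split; lia.
Qed.

Lemma col_first n mu : locally_valid n mu -> (2 <= n)%N ->
  (1 <= (flippable n mu 1 1 : nat) + flippable n mu 2 1)%N /\
  (((flippable n mu 1 1 : nat) + flippable n mu 2 1 <= 1)%N ->
     h mu 1 2 - h mu 1 1 = h mu 2 2 - h mu 2 1).
Proof.
move=> V n2.
have ir1 : (1 <= 1 <= 2)%N by []. have ir2 : (1 <= 2 <= 2)%N by [].
have jr : (1 <= 1 <= n)%N by lia.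
case: (resp_h V) => R1 R2 R3.
have E1 := R1 1%N (ltac:(lia)); have E3 := R2 1%N (ltac:(lia)); have E4 := R2 2%N (ltac:(lia)).
have E6 := R3 1%N (ltac:(lia)).
have P1 := mv_pm (mu (3 * 1 - 1)%N); have P3 := mv_pm (mu (3 * 1 - 3)%N);
have P4 := mv_pm (mu (3 * 2 - 3)%N); have P6 := mv_pm (mu (3 * 1 + 1)%N).
have Ht : (h mu 2 1 - h mu 1 1 = 1 \/ h mu 2 1 - h mu 1 1 = -1) by lia.
have Ht' : (h mu 1 1 - h mu 2 1 = 1 \/ h mu 1 1 - h mu 2 1 = -1) by lia.
have F1 : h mu 1 2 - h mu 1 1 = h mu 2 1 - h mu 1 1 -> flippable n mu 1 1.
  move=> e; apply: (flip_of V ir1 jr Ht) => //.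
have F2 : h mu 2 2 - h mu 2 1 = h mu 1 1 - h mu 2 1 -> flippable n mu 2 1.
  move=> e; apply: (flip_of V ir2 jr Ht') => //.
split.
- case: (boolP (h mu 1 2 - h mu 1 1 == h mu 2 1 - h mu 1 1)) => [/eqP e|/eqP e].
  + by rewrite F1.
  + rewrite F2 ?addn1 //; lia.
- case: (boolP (h mu 1 2 - h mu 1 1 == h mu 2 2 - h mu 2 1)) => [/eqP //|/eqP e].
  rewrite F1; last lia. rewrite F2 //; lia.
Qed.

Lemma col_last m mu : locally_valid m.+1 mu -> (1 <= m)%N ->
  (1 <= (flippable m.+1 mu 1 m.+1 : nat) + flippable m.+1 mu 2 m.+1)%N.
Proof.
move=> V m1.
have ir1 : (1 <= 1 <= 2)%N by []. have ir2 : (1 <= 2 <= 2)%N by [].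
have jr : (1 <= m.+1 <= m.+1)%N by lia.
case: (resp_h V) => R1 R2 R3.
have E1 := R1 m (ltac:(lia)); have E3 := R2 m (ltac:(lia)); have E4 := R2 m.+1 (ltac:(lia)).
have E6 := R3 m (ltac:(lia)).
have P1 := mv_pm (mu (3 * m - 1)%N); have P3 := mv_pm (mu (3 * m - 3)%N);
have P4 := mv_pm (mu (3 * m.+1 - 3)%N); have P6 := mv_pm (mu (3 * m + 1)%N).
have Ht : (h mu 2 m.+1 - h mu 1 m.+1 = 1 \/ h mu 2 m.+1 - h mu 1 m.+1 = -1) by lia.
have Ht' : (h mu 1 m.+1 - h mu 2 m.+1 = 1 \/ h mu 1 m.+1 - h mu 2 m.+1 = -1) by lia.
case: (boolP (h mu 1 m - h mu 1 m.+1 == h mu 2 m.+1 - h mu 1 m.+1)) => [/eqP e|/eqP e].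
- have Fl : flippable m.+1 mu 1 m.+1.
    apply: (flip_of V ir1 jr Ht) => //=; try (by move=> _; lia); by rewrite ltnn.
  by rewrite Fl.
- have Fl : flippable m.+1 mu 2 m.+1.
    apply: (flip_of V ir2 jr Ht') => //=; try (by move=> _; lia); by rewrite ltnn.
  by rewrite Fl addn1.
Qed.

Lemma deg2_shape n mu : (2 <= n)%N -> locally_valid n mu -> ofg_degree n mu = 2%N ->
  exists d t : int, [/\ d = 1 \/ d = -1, t = 1 \/ t = -1 &
   forall j, (1 <= j <= n)%N -> h mu 1 j = d * (j.-1)%:Z /\ h mu 2 j = d * (j.-1)%:Z + t].
Proof.
move=> n2 V Hd.
pose G j := ((flippable n mu 1 j : nat) + flippable n mu 2 j)%N.
have Hsum : (\sum_(0 <= j < n) G j.+1)%N = 2%N.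
  rewrite -Hd /ofg_degree big_mkord big_ord_recr big_ord_recr big_ord0 /= add0n -big_split.
  done.
case: (col_first V n2) => G1 G1'.
have [m Hm] : exists m, n = m.+2 by exists (n - 2)%N; lia.
have Gn := col_last (m := m.+1) (mu := mu) (ltac:(rewrite -Hm; exact: V)) isT.
rewrite -Hm in Gn.
have Hs2 : (G 1 + \sum_(1 <= j < m.+1) G j.+1 + G m.+2)%N = 2%N.
  have E : (\sum_(0 <= j < m.+2) G j.+1 = G 1 + \sum_(1 <= j < m.+1) G j.+1 + G m.+2)%N.
    by rewrite big_ltn // big_nat_recr //= addnA.
  by rewrite -E -Hm.
have Hint : (\sum_(1 <= j < m.+1) G j.+1 == 0)%N.
  apply/eqP; move: Hs2 G1 Gn; rewrite /G Hm; lia.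
have G1le : (G 1 <= 1)%N by move: Hs2 Gn; rewrite /G Hm; lia.
have Z : forall j, (1 < j < n)%N -> ~~ flippable n mu 1 j /\ ~~ flippable n mu 2 j.
  move=> j jr; move: Hint; rewrite sum_nat_seq_eq0 => /allP /(_ j.-1).
  rewrite mem_index_iota (_ : (1 <= j.-1 < m.+1)%N); last lia.
  move=> /(_ isT) /=; rewrite /G (_ : j.-1.+1 = j); last lia.
  by case: (flippable n mu 1 j); case: (flippable n mu 2 j).
set d := h mu 1 2 - h mu 1 1.
have chain : forall k, (1 <= k)%N -> (k < n)%N ->
    h mu 1 k.+1 - h mu 1 k = d /\ h mu 2 k.+1 - h mu 2 k = d.
  elim=> [//|k IH] k1 kn.
  case: k IH k1 kn => [|k] IH k1 kn.
    by split => //; rewrite /d; apply/esym/G1'.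
  have [Ih1 Ih2] := IH isT (ltnW kn).
  have [z1 z2] := Z k.+2 (ltac:(lia)).
  have [C1 C2 C3] := col_int V (isT : (1 <= k.+1)%N) kn z1 z2.
  split; [rewrite -C2 | rewrite -C3]; lia.
case: (resp_h V) => R1 R2 R3.
exists d, (h mu 2 1 - h mu 1 1); split.
- rewrite /d; have := R1 1%N (ltac:(lia)); have := mv_pm (mu (3 * 1 - 1)%N); lia.
- have := R2 1%N (ltac:(lia)); have := mv_pm (mu (3 * 1 - 3)%N); lia.
- elim=> [//|j IH] jr.
  case: j IH jr => [|j] IH jr.
    by rewrite h11 /=; split; ring.
  have [I1 I2] := IH (ltac:(lia)).
  have [c1 c2] := chain j.+1 isT (ltac:(lia)).
  move: I1 I2 c1 c2; rewrite /=; clearbody d; lia.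
Qed.

Lemma sum_n2j n : \sum_(0 <= j < n) `|n%:Z - 2 * j%:Z| = (cc n)%:Z.
Proof.
have [p [Hn|Hn]] : exists p, n = p.*2 \/ n = p.*2.+1.
  exists n./2; rewrite -{1 3}(odd_double_half n); case: (odd n); [right|left] => //.
all: subst n; rewrite /cc.
- have -> : (p.*2 = p + p)%N by lia.
  rewrite -[RHS](_ : (p * p.+1 + p * p.-1)%N%:Z = _); last by congr Posz; nia.
  rewrite -S2; apply: eq_big_nat => j jr; lia.
- have -> : (p.*2.+1 = p.+1 + p)%N by lia.
  rewrite -[RHS](_ : (p.+1 ^ 2 + p ^ 2)%N%:Z = _); last by congr Posz; nia.
  rewrite -S1; apply: eq_big_nat => j jr; lia.
Qed.

Lemma LB n (d t H : int) : (d = 1 \/ d = -1) -> (t = 1 \/ t = -1) ->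
  2 * (cc n)%:Z <= \sum_(0 <= j < n) (`|H - 2 * d * j%:Z| + `|H - 2 * d * j%:Z - 2 * t|).
Proof.
move=> Hd Ht.
have K1 : \sum_(0 <= j < n) 2 * `|n%:Z - 2 * j%:Z| = 2 * (cc n)%:Z.
  by rewrite -mulr_sumr sum_n2j.
have K2 : \sum_(0 <= j < n) 2 * `|n%:Z - 2 - 2 * j%:Z| = 2 * (cc n)%:Z.
  rewrite -K1 big_nat_rev /=; apply: eq_big_nat => j jr; rewrite add0n; lia.
rewrite big_split /= [X in _ <= _ + X]big_nat_rev /= -big_split /=.
case: Hd => ?; case: Ht => ?; subst d t.
- rewrite -K1; apply: ler_sum_nat => j jr; rewrite add0n; lia.
- rewrite -K2; apply: ler_sum_nat => j jr; rewrite add0n; lia.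
- rewrite -K2; apply: ler_sum_nat => j jr; rewrite add0n; lia.
- rewrite -K1; apply: ler_sum_nat => j jr; rewrite add0n; lia.
Qed.

Lemma h_opp mu i j : h (opposite mu) i j = - h mu i j.
Proof.
rewrite /h /opposite; under eq_bigr do rewrite mv_neg.
rewrite sumrN; case: ifP => _; rewrite ?mv_neg; ring.
Qed.

Lemma valid_opp n mu : locally_valid n mu -> locally_valid n (opposite mu).
Proof.
move=> /lvP H; apply/lvP => k kr; rewrite /lvk /opposite !mv_neg.
have := H k kr; rewrite /lvk => E; rewrite -E; ring.
Qed.

Lemma cst_split n mu nu H : cst n mu nu H =
  \sum_(0 <= j < n) (`|H + h nu 1 j.+1 - h mu 1 j.+1| + `|H + h nu 2 j.+1 - h mu 2 j.+1|).
Proof.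
rewrite /cst -(pair_bigA _ (fun (i : 'I_2) (j : 'I_n) =>
   `|H + h nu i.+1 j.+1 - h mu i.+1 j.+1|)).
by rewrite big_ord_recr big_ord_recr big_ord0 /= add0r -big_split /= big_mkord.
Qed.

Lemma opp_lower n mu k : (2 <= n)%N -> locally_valid n mu -> ofg_degree n mu = 2%N ->
  ofg_walk n k mu (opposite mu) -> (cc n <= k)%N.
Proof.
move=> n2 V Hd W.
case: (walk_lb (ltnW n2) V W) => H HC.
case: (deg2_shape n2 V Hd) => d [t [Hdd Htt Hh]].
have := LB n H Hdd Htt.
rewrite (_ : \sum_(0 <= j < n) _ = cst n mu (opposite mu) H).
  by move: HC; lia.
rewrite cst_split; apply: eq_big_nat => j jr.
have [E1 E2] := Hh j.+1 (ltac:(lia)); rewrite !h_opp E1 E2 /=.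
congr (_ + _); congr (`|_|); ring.
Qed.

Definition mu0 : mv_assignment := fun e => (e %% 3 != 1)%N.

Lemma mu0_valid n : locally_valid n mu0.
Proof.
apply/lvP => k kr; rewrite /lvk /mu0.
have -> : ((3 * k - 1) %% 3 != 1)%N = true by lia.
have -> : ((3 * k) %% 3 != 1)%N = true by lia.
have -> : ((3 * k + 1) %% 3 != 1)%N = false by apply/negbTE; lia.
have -> : ((3 * k - 3) %% 3 != 1)%N = true by lia.
by [].
Qed.

Lemma h_mu0 n i j : (1 <= i <= 2)%N -> (1 <= j <= n)%N -> h mu0 i j = j%:Z + i%:Z - 2.
Proof.
move=> ir jr.
have R : resp n mu0 (fun i j => j%:Z + i%:Z - 2).
{ split => j' jr'; rewrite /mu0.
  - have -> : ((3 * j' - 1) %% 3 != 1)%N = true by lia. rewrite /=; lia.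
  - have -> : ((3 * j' - 3) %% 3 != 1)%N = true by lia. rewrite /=; lia.
  - have -> : ((3 * j' + 1) %% 3 != 1)%N = false by apply/negbTE; lia. rewrite /=; lia. }
rewrite -(resp_uniq R ir jr) /=; ring.
Qed.

Lemma mu0_flip n i j : (2 <= n)%N -> (1 <= i <= 2)%N -> (1 <= j <= n)%N ->
  flippable n mu0 i j = if i == 1%N then j == 1%N else j == n.
Proof.
move=> n2 ir jr.
have e1 := @h_mu0 n 1 j.-1; have e2 := @h_mu0 n 1 j; have e3 := @h_mu0 n 1 j.+1.
have e4 := @h_mu0 n 2 j.-1; have e5 := @h_mu0 n 2 j; have e6 := @h_mu0 n 2 j.+1.
apply/idP/idP.
- move/(flippableP (mu0_valid n) ir jr) => [s [Hs [A B C]]].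
  have [? | ?] : (i = 1 \/ i = 2)%N by lia.
  all: subst i; move: A B C; rewrite /=; lia.
- have [? | ?] : (i = 1 \/ i = 2)%N by lia.
  all: subst i => /= /eqP ?; subst j.
  + apply: (flip_of (s := 1) (mu0_valid n)) => //=; lia.
  + apply: (flip_of (s := -1) (mu0_valid n)) => //=; lia.
Qed.

Lemma mu0_deg n : (2 <= n)%N -> ofg_degree n mu0 = 2%N.
Proof.
move=> n2; rewrite /ofg_degree big_ord_recr big_ord_recr big_ord0 /= add0n.
rewrite (eq_bigr (fun j : 'I_n => (j == 0 :> nat)%N : nat)); last first.
  move=> j _; rewrite mu0_flip //; have := ltn_ord j; lia.
rewrite [X in (_ + X)%N](eq_bigr (fun j : 'I_n => (j.+1 == n :> nat)%N : nat)); last first.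
  move=> j _; rewrite mu0_flip //; have := ltn_ord j; lia.
have [m ->] : exists m, n = m.+1 by exists n.-1; lia.
rewrite big_ord_recl big_ord_recr /=.
rewrite big1 ?big1 ?eqxx //.
all: move=> j _; rewrite /=; have := ltn_ord j; lia.
Qed.

Definition col (mu : mv_assignment) : coloring := fun i j => ((h mu i j)%:~R : 'Z_3).

Lemma z3_mv b : ((mv_val b)%:~R : 'Z_3) = z3_of b.
Proof. by case: b. Qed.

Lemma z3_ne (x : 'Z_3) b : (x + z3_of b != x).
Proof. by case: b; rewrite -subr_eq0 addrAC subrr add0r. Qed.

Lemma z3_one b : (z3_of b == 1 :> 'Z_3) = b.
Proof. by case: b. Qed.

Lemma col_step mu a b c d e : h mu c d - h mu a b = mv_val e ->
  col mu c d = col mu a b + z3_of e.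
Proof.
move=> E; rewrite /col -z3_mv -intrD -E; congr (_%:~R); ring.
Qed.

Lemma col_corr n mu : (1 <= n)%N -> locally_valid n mu -> corresponds n (col mu) mu.
Proof.
move=> n1 V; case: (resp_h V) => R1 R2 R3; split; [|split].
- move=> j jr; apply: col_step; apply: R1; lia.
- apply: col_step; apply: R2; lia.
- move=> j jr; apply: col_step.
  have := R3 j.-1 (ltac:(lia)); rewrite (_ : j.-1.+1 = j)%N; last lia.
  by rewrite (_ : (3 * j.-1 + 1 = 3 * j - 2)%N); last lia.
Qed.

Lemma col_proper n mu : locally_valid n mu -> proper_coloring n (col mu).
Proof.
move=> V; case: (resp_h V) => R1 R2 R3; split.
- move=> i j ir j1 jn.
  have [? | ?] : (i = 1 \/ i = 2)%N by lia.
  all: subst i.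
  + rewrite (col_step (R1 j (ltac:(lia)))) eq_sym; exact: z3_ne.
  + rewrite (col_step (R3 j (ltac:(lia)))); exact: z3_ne.
- move=> j jr; rewrite (col_step (R2 j jr)) eq_sym; exact: z3_ne.
Qed.

Lemma ew_mv (g : coloring) a1 a2 b1 b2 e : g b1 b2 = g a1 a2 + z3_of e ->
  edge_weight g a1 a2 b1 b2 = mv_val e.
Proof. by move=> E; rewrite /edge_weight E addrC addKr z3_one; clear E; case: e. Qed.

Lemma path_h n mu i j : locally_valid n mu -> (1 <= i <= 2)%N -> (1 <= j <= n)%N ->
  path_weight (col mu) i j = h mu i j.
Proof.
move=> V ir jr; case: (resp_h V) => R1 R2 R3; rewrite /path_weight /h; congr (_ + _).
- apply: eq_big_nat => k kr; apply: ew_mv; apply: col_step; apply: R1; lia.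
- case: ifP => // _; apply: ew_mv; apply: col_step; apply: R2; lia.
Qed.

Lemma conj1 n : (2 <= n)%N -> forall mu1 mu2 : mv_assignment,
     locally_valid n mu1 -> locally_valid n mu2 ->
     exists (g b : coloring),
       [/\ proper_coloring n g, corresponds n g mu1,
           proper_coloring n b, corresponds n b mu2 &
           exists H : int, (2 %| H)%Z /\
             (height_cost n g b H <= (ceil_half_sq n)%:~R)%R].
Proof.
move=> hn mu1 mu2 V1 V2; exists (col mu1), (col mu2); split.
- exact: col_proper.
- apply: col_corr => //; lia.
- exact: col_proper.
- apply: col_corr => //; lia.
- case: (cost_bound hn V1 V2) => m Hm; exists (2 * m); split; first by lia.
  have E : \sum_(i < 2) \sum_(j < n) `|2 * m + rel_height (col mu1) (col mu2) i.+1 j.+1|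
           = cst n mu1 mu2 (2 * m).
  { rewrite /cst -(pair_bigA _ (fun (i : 'I_2) (j : 'I_n) =>
       `|2 * m + h mu2 i.+1 j.+1 - h mu1 i.+1 j.+1|)).
    apply: eq_bigr => i _; apply: eq_bigr => j _.
    have ir : (1 <= i.+1 <= 2)%N by have := ltn_ord i; lia.
    have jr : (1 <= j.+1 <= n)%N by have := ltn_ord j; lia.
    rewrite /rel_height !(path_h _ ir jr) //; congr (`|_|); ring. }
  rewrite /height_cost E ceilE mul1r mulrC ler_pdivrMr //.
  rewrite -[(2 : rat)]/((2%:Z)%:~R) -intrM ler_int; lia.
Qed.

Lemma conj2 n : (2 <= n)%N -> forall mu1 mu2 : mv_assignment,
     locally_valid n mu1 -> locally_valid n mu2 ->
     ofg_dist_le n mu1 mu2 `|ceil_half_sq n|%N.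
Proof.
move=> hn mu1 mu2 V1 V2; rewrite ceilE /=.
have n1 : (1 <= n)%N by lia.
case: (cost_bound hn V1 V2) => m Hm.
case: (walk_build n1 V2 V1 Hm) => k' [k'k W].
by exists k'.
Qed.

Local Close Scope ring_scope.
Unset Implicit Arguments.

Theorem theorem5p8 (n : nat) (hn : 2 <= n) :
  (forall mu1 mu2 : mv_assignment,
     locally_valid n mu1 -> locally_valid n mu2 ->
     exists (g b : coloring),
       [/\ proper_coloring n g, corresponds n g mu1,
           proper_coloring n b, corresponds n b mu2 &
           exists H : int, (2 %| H)%Z /\
             (height_cost n g b H <= (ceil_half_sq n)%:~R)%R]) /\
  (forall mu1 mu2 : mv_assignment,
     locally_valid n mu1 -> locally_valid n mu2 ->
     ofg_dist_le n mu1 mu2 `|ceil_half_sq n|%N) /\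
  (forall mu : mv_assignment, locally_valid n mu -> ofg_degree n mu = 2 ->
     ofg_dist n mu (opposite mu) `|ceil_half_sq n|%N) /\
  (exists mu : mv_assignment, locally_valid n mu /\ ofg_degree n mu = 2).
Proof.
split; [exact: conj1 | split; [exact: conj2 | split]].
- move=> mu V Hd; split; first exact: conj2 (valid_opp V).
  move=> k W; rewrite ceilE /=; exact: opp_lower hn V Hd W.
- exists mu0; split; [exact: mu0_valid | exact: mu0_deg].
Qed.
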